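(* Let $G$ be a graph, let $V(G)=V_1\cup V_2$ be a partition of its vertex set, and let $X\subseteq V_1$ be the vertex boundary of $V_2$ in $G$. Let $H$ be a connected graph with $|H|\ge|V_2|$ and let $G':=(G[V_1],X)\vee H$. Let $M\in S(G)$ and let $\sigma'$ be a multiset of $|H|-|V_2|$ real numbers such that the multiset $\sigma(M[V_2])\cup\sigma'$ is generically realisable for $H$. Then there exists $N\in S(G')$ with spectrum $\sigma(N)=\sigma(M)\cup\sigma'$ (union of multisets).
   Context: $S(G)$ is the set of real symmetric matrices indexed by $V(G)$ whose $(i,j)$ off-diagonal entry is nonzero iff $\{i,j\}\in E(G)$ (diagonal unrestricted). $G[W]$ is the subgraph induced on $W$ and $M[W]$ the principal submatrix of $M$ with rows and columns in $W$; $\sigma(\cdot)$ is the spectrum as a multiset. The vertex boundary of $W\subseteq V(G)$ is the set of vertices in $V(G)\setminus W$ adjacent in $G$ to some vertex of $W$. For disjoint graphs $G_1,G_2$ and $U_1\subseteq V(G_1)$, the partial join $(G_1,U_1)\vee G_2$ is $G_1\cup G_2$ together with all edges joining each vertex of $U_1$ to each vertex of $G_2$. For a connected graph $H$ of order $n$, a multiset $\sigma$ of $n$ reals is generically realisable for $H$ if for every finite set $\mathcal Y\subseteq\mathbb{R}^n\setminus\{\mathbf 0\}$ there is a real orthogonal matrix $U$ with $UDU^\top\in S(H)$, $D$ a fixed diagonal matrix with spectrum $\sigma$, such that $U\mathbf y$ has no zero entry for all $\mathbf y\in\mathcal Y$. *)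

(* Defs.v *)
From mathcomp Require Import all_boot all_order all_algebra.
From mathcomp Require Import reals.
Set Implicit Arguments. Unset Strict Implicit. Unset Printing Implicit Defensive.
Import Order.TTheory GRing.Theory Num.Theory.
Local Open Scope ring_scope.

Definition simple_graph n (e : rel 'I_n) : Prop :=
  symmetric e /\ irreflexive e.

Definition connected_graph n (e : rel 'I_n) : Prop :=
  forall x y : 'I_n, connect e x y.

Definition in_S (R : realType) n (e : rel 'I_n) (A : 'M[R]_n) : Prop :=
  A^T = A /\ forall i j : 'I_n, i != j -> (A i j != 0) = e i j.

(* Principal submatrix M[W], rows/columns indexed by the elements of W
   (in the enumeration order of W; the spectrum does not depend on it). *)
Definition principal_sub (R : realType) n (M : 'M[R]_n) (W : {set 'I_n}) :
  'M[R]_#|W| := \matrix_(i, j) M (enum_val i) (enum_val j).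

Definition has_spectrum (R : realType) n (A : 'M[R]_n) (s : seq R) : Prop :=
  char_poly A = \prod_(x <- s) ('X - x%:P).

Definition vertex_boundary n (e : rel 'I_n) (W : {set 'I_n}) : {set 'I_n} :=
  [set x | (x \notin W) && [exists y, (y \in W) && e x y]].

(* Partial join (G[V1], X) \/ H, with V1 (k := #|V1| vertices) listed first
   (via enum_val) and the m vertices of H afterwards. *)
Definition partial_join n (e : rel 'I_n) (V1 X : {set 'I_n}) m (h : rel 'I_m) :
  rel 'I_(#|V1| + m) :=
  fun a b =>
    match split a, split b with
    | inl i, inl j => e (enum_val i) (enum_val j)
    | inr a', inr b' => h a' b'
    | inl i, inr _ => enum_val i \in X
    | inr _, inl j => enum_val j \in X
    end.

Arguments partial_join [n] e V1 X [m] h _ _.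

Definition orthogonal_mx (R : realType) m (U : 'M[R]_m) : Prop :=
  U *m U^T = 1%:M.

Definition generically_realisable (R : realType) m (h : rel 'I_m) (s : seq R)
  : Prop :=
  size s = m /\
  forall Y : seq 'cV[R]_m, all (fun y => y != 0) Y ->
    exists U : 'M[R]_m,
      [/\ orthogonal_mx U,
          in_S h (U *m diag_mx (\row_(i < m) s`_i) *m U^T) &
          forall y, y \in Y -> forall i : 'I_m, (U *m y) i 0 != 0].

(* Main.v *)
Require Import Defs.
From mathcomp Require Import all_boot all_order all_algebra.
From mathcomp Require Import reals.
From mathcomp Require Import ring lra.
Import Order.TTheory GRing.Theory Num.Theory.
Local Open Scope ring_scope.
Set Implicit Arguments. Unset Strict Implicit. Unset Printing Implicit Defensive.

Section S.
Variable R : realType.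


Lemma orth_tr n (P : 'M[R]_n) : P *m P^T = 1%:M -> P^T *m P = 1%:M.
Proof. exact: mulmx1C. Qed.

Lemma char_poly_orth n (P A : 'M[R]_n) : P *m P^T = 1%:M ->
  char_poly (P *m A *m P^T) = char_poly A.
Proof.
move=> PP; rewrite /char_poly /char_poly_mx.
have -> : 'X%:M - map_mx polyC (P *m A *m P^T) =
   map_mx polyC P *m ('X%:M - map_mx polyC A) *m map_mx polyC P^T.
  rewrite mulmxBr mulmxBl !map_mxM; congr (_ - _).
  rewrite mul_mx_scalar -scalemxAl -map_mxM PP map_mx1.
  by rewrite scalemx1.
rewrite !det_mulmx mulrC mulrA -!det_mulmx -map_mxM.
by rewrite (orth_tr PP) map_mx1 mul1mx.
Qed.

Lemma sum_delta n (a : 'I_n) (g : 'I_n -> R) :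
  \sum_k (a == k)%:R * g k = g a.
Proof.
rewrite (bigD1 a) //= eqxx mul1r big1 ?addr0 // => k /negbTE.
by rewrite eq_sym => ->; rewrite mul0r.
Qed.

Lemma char_poly_reindex p n (f : 'I_p -> 'I_n) (A : 'M[R]_n) :
  p = n -> injective f ->
  char_poly (\matrix_(i, j) A (f i) (f j)) = char_poly A.
Proof.
move=> E finj; subst p.
pose P : 'M[R]_n := \matrix_(i, j) (f i == j)%:R.
have PA : forall B : 'M[R]_n, P *m B = \matrix_(i, j) B (f i) j.
  by move=> B; apply/matrixP => i j; rewrite !mxE; under eq_bigr do rewrite mxE; rewrite sum_delta.
have AP : forall B : 'M[R]_n, B *m P^T = \matrix_(i, j) B i (f j).
  move=> B; apply/matrixP => i j; rewrite !mxE.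
  under eq_bigr do rewrite !mxE mulrC; by rewrite sum_delta.
have PP : P *m P^T = 1%:M.
  rewrite AP; apply/matrixP => i j; rewrite !mxE (inj_eq finj).
  by case: (i == j).
rewrite -(char_poly_orth A PP) AP PA; congr char_poly.
by apply/matrixP => i j; rewrite !mxE.
Qed.


Lemma e0_mul k p (A : 'M[R]_(k.+1, p)) : (delta_mx 0 0 : 'rV_k.+1) *m A = row 0 A.
Proof. by rewrite -rowE. Qed.

Lemma dot_pos k (v : 'rV[R]_k) : v != 0 -> 0 < (v *m v^T) 0 0.
Proof.
move=> vn0; rewrite mxE.
have [j vj] : exists j, v 0 j != 0.
  apply/existsP; apply: contraR vn0 => /existsPn H; apply/eqP/rowP => j.
  by rewrite mxE; move: (H j); rewrite negbK => /eqP.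
rewrite (bigD1 j) //= mxE -expr2 ltr_pwDl //.
  by rewrite lt0r sqr_ge0 andbT sqrf_eq0.
by apply: sumr_ge0 => i _; rewrite mxE -expr2 sqr_ge0.
Qed.

Lemma householder k (u : 'rV[R]_k.+1) : (u *m u^T) 0 0 = 1 ->
  exists H : 'M[R]_k.+1, [/\ H^T = H, H *m H = 1%:M & row 0 H = u].
Proof.
move=> uu.
pose e0 : 'rV[R]_k.+1 := delta_mx 0 0.
have e0e0 : (e0 *m e0^T) 0 0 = 1.
  by rewrite /e0 e0_mul !mxE eqxx.
have ue0 : (u *m e0^T) 0 0 = u 0 0.
  by rewrite -[u *m _]trmxK trmx_mul trmxK /e0 e0_mul !mxE.
have e0u : (e0 *m u^T) 0 0 = u 0 0.
  by rewrite /e0 e0_mul !mxE.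
have [ue|une] := eqVneq u e0.
  exists 1%:M; split; [exact: trmx1 | exact: mul1mx|].
  by rewrite ue /e0 -e0_mul mulmx1.
pose w := u - e0.
have wn0 : w != 0 by rewrite subr_eq0.
pose q := (w *m w^T) 0 0.
have qE : q = 2 - 2 * u 0 0.
  have F : forall A B : 'M[R]_1, (A - B) 0 0 = A 0 0 - B 0 0.
    by move=> A B; rewrite !mxE.
  rewrite /q /w linearB /= mulmxBl !mulmxBr !F uu ue0 e0u e0e0; ring.
have q0 : q != 0 by rewrite gt_eqF // dot_pos.
pose W := w^T *m w.
have WW : W *m W = q *: W.
  by rewrite /W mulmxA -(mulmxA w^T) (mx11_scalar (w *m w^T)) mul_mx_scalar -scalemxAl.
pose a := 2 / q.
exists (1%:M - a *: W); split.
- by rewrite linearB /= trmx1 linearZ /= /W trmx_mul trmxK.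
  rewrite mulmxBl !mulmxBr mul1mx mulmx1 -scalemxAl mul1mx -scalemxAr WW !scalerA.
  have -> : a * a * q = a + a by rewrite /a; field.
  by rewrite scalerDl opprB addrK subrK.
- rewrite -[row 0 _]e0_mul -/e0 mulmxBr mulmx1 -scalemxAr /W mulmxA.
  rewrite (mx11_scalar (e0 *m w^T)) mul_scalar_mx scalerA.
  have -> : (e0 *m w^T) 0 0 = u 0 0 - 1.
    by rewrite /w linearB /= mulmxBr -e0u -e0e0 !mxE.
  have -> : a * (u 0 0 - 1) = -1.
    rewrite /a qE; field; by rewrite -qE.
  by rewrite scaleN1r opprK /w addrC subrK.
Qed.

Lemma char_poly_block m1 m2 (A : 'M[R]_m1) (B : 'M[R]_m2) :
  char_poly (block_mx A 0 0 B) = char_poly A * char_poly B.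
Proof.
rewrite /char_poly /char_poly_mx map_block_mx !map_mx0 (scalar_mx_block m1 m2).
by rewrite opp_block_mx add_block_mx !oppr0 !addr0 det_ublock.
Qed.

Lemma char_poly_diag n (d : 'rV[R]_n) :
  char_poly (diag_mx d) = \prod_(i < n) ('X - (d 0 i)%:P).
Proof.
rewrite char_poly_trig ?diag_mx_is_trig //.
by apply: eq_bigr => i _; rewrite mxE eqxx mulr1n.
Qed.

Lemma char_poly_scalar1 (x : R) : char_poly (x%:M : 'M_1) = 'X - x%:P.
Proof.
by rewrite char_poly_trig ?scalar_mx_is_trig // big_ord1 mxE eqxx mulr1n.
Qed.

Lemma diag_cons k (x : R) (s : seq R) :
  diag_mx (\row_(i < 1 + k) (x :: s)`_i) =
  block_mx (x%:M : 'M_1) 0 0 (diag_mx (\row_(i < k) s`_i)).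
Proof.
have -> : \row_(i < 1 + k) (x :: s)`_i = row_mx (\row_(i < 1) x) (\row_(i < k) s`_i).
  apply/rowP => j; rewrite !mxE; case: splitP => j' ->; rewrite mxE //.
  by rewrite ord1.
rewrite diag_mx_row; congr block_mx.
by apply/matrixP => i j; rewrite !ord1 !mxE.
Qed.

Lemma spectral k (C : 'M[R]_k) (s : seq R) : C^T = C ->
  char_poly C = \prod_(x <- s) ('X - x%:P) ->
  exists Q : 'M[R]_k, Q *m Q^T = 1%:M /\ Q^T *m C *m Q = diag_mx (\row_i s`_i).
Proof.
elim: k C s => [|k IH] C s CT cp.
  exists 1%:M; split; first by rewrite trmx1 mulmx1.
  by apply/matrixP => [[]].
have ss : size s = k.+1.
  by move: (size_char_poly C); rewrite cp size_prod_XsubC => -[].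
case: s cp ss => [//|x s'] cp ss.
have : eigenvalue C x.
  by rewrite eigenvalue_root_char cp root_prod_XsubC mem_head.
case/eigenvalueP => v vC vn0.
pose r := Num.sqrt ((v *m v^T) 0 0).
have vv0 : 0 < (v *m v^T) 0 0 by exact: dot_pos.
have rpos : 0 < r by rewrite sqrtr_gt0.
pose u := r^-1 *: v.
have uu : (u *m u^T) 0 0 = 1.
  rewrite /u linearZ /= -scalemxAl -scalemxAr scalerA [LHS]mxE.
  rewrite -[X in _ * X](sqr_sqrtr (ltW vv0)) -/r.
  by field; rewrite gt_eqF.
have uC : u *m C = x *: u by rewrite -scalemxAl vC !scalerA mulrC.
have [H [HT HH Hrow]] := householder uu.
pose C1 : 'M[R]_(1 + k) := H *m C *m H.
have C1T : C1^T = C1 by rewrite /C1 !trmx_mul HT CT mulmxA.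
have row0 : row 0 C1 = x *: row 0 1%:M.
  by rewrite /C1 !row_mul Hrow uC -scalemxAl -Hrow -row_mul HH.
have r0 : forall j, C1 0 j = x * (1 *+ (0 == j)).
  by move=> j; move/rowP: row0 => /(_ j); rewrite !mxE.
have c0 : forall i, C1 i 0 = x * (0 == i)%:R.
  by move=> i; rewrite -r0 -[in LHS]C1T mxE.
have l0 : lshift k (0 : 'I_1) = 0 :> 'I_k.+1 by apply/val_inj.
have rn0 : forall j : 'I_k, (rshift 1 j == 0 :> 'I_k.+1) = false.
  by move=> j; apply/negbTE; rewrite -val_eqE.
have C1E : C1 = block_mx (x%:M : 'M_1) 0 0 (drsubmx C1).
  apply/matrixP => i j; rewrite -[i]splitK -[j]splitK.
  case: (split i) => a; case: (split j) => b; rewrite /=.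
  - by rewrite block_mxEul !ord1 l0 r0 !mxE !eqxx mulr1.
  - by rewrite block_mxEur !ord1 l0 r0 eq_sym rn0 mulr0 mxE.
  - by rewrite block_mxEdl !ord1 l0 c0 eq_sym rn0 mulr0 mxE.
  - by rewrite block_mxEdr /drsubmx /rsubmx /dsubmx !mxE.
set C' := drsubmx C1 in C1E.
have C'T : C'^T = C'.
  by move: C1T; rewrite C1E tr_block_mx => /eq_block_mx [_ _ _ ->].
have HHt : H *m H^T = 1%:M by rewrite HT.
have cpC' : char_poly C' = \prod_(y <- s') ('X - y%:P).
  have := char_poly_orth C HHt; rewrite HT -/C1 C1E => E2.
  have := etrans (esym (char_poly_block (x%:M : 'M_1) C')) E2.
  rewrite char_poly_scalar1 cp big_cons; apply: mulfI.
  by rewrite polyXsubC_eq0.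
have [Q' [Q'Q Q'C]] := IH C' s' C'T cpC'.
pose B : 'M[R]_(1 + k) := block_mx 1%:M 0 0 Q'.
have BB : B *m B^T = 1%:M.
  rewrite /B tr_block_mx !trmx0 trmx1 mulmx_block !mulmx0 !mul0mx !mulmx1.
  by rewrite !addr0 !add0r Q'Q -scalar_mx_block.
exists (H *m B); split.
  by rewrite trmx_mul mulmxA -(mulmxA H) BB mulmx1 HHt.
rewrite trmx_mul HT !mulmxA -(mulmxA B^T H C) -(mulmxA B^T (H *m C) H).
have -> : H *m C *m H = C1 by [].
have key : (B^T *m C1 *m B : 'M_(1 + k)) =
    block_mx (x%:M : 'M_1) 0 0 (Q'^T *m C' *m Q').
  rewrite C1E /B tr_block_mx !trmx0 trmx1 !mulmx_block !mulmx0 !mul0mx !mulmx1 !mul1mx.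
  by rewrite !addr0 !add0r mul0mx.
rewrite Q'C in key.
exact: etrans key (esym (diag_cons k x s')).
Qed.

Lemma char_poly_cast p q (E : p = q) (X : 'M[R]_p) :
  char_poly (castmx (E, E) X) = char_poly X.
Proof. by case: q / E; rewrite castmx_id. Qed.

Lemma split_lsh m n (a : 'I_m) : split (lshift n a) = inl a.
Proof. exact: (unsplitK (inl _ a)). Qed.

Lemma split_rsh m n (a : 'I_n) : split (rshift m a) = inr a.
Proof. exact: (unsplitK (inr _ a)). Qed.

Lemma orthC n (P : 'M[R]_n) : P *m P^T = 1%:M -> P^T *m P = 1%:M.
Proof. exact: mulmx1C. Qed.


Lemma col_mulmx m n p (P : 'M[R]_(m, n)) (X : 'M[R]_(n, p)) j :
  col j (P *m X) = P *m col j X.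
Proof. apply/matrixP => i k; rewrite !mxE; by apply: eq_bigr => t _; rewrite !mxE. Qed.

Lemma split_cases m n (i : 'I_(m + n)) :
  (exists a, i = lshift n a) \/ (exists b, i = rshift m b).
Proof. rewrite -(splitK i); case: (split i) => a; [left|right]; exists a; done. Qed.

End S.

Theorem lemma3p6 (R : realType) (n : nat) (e : rel 'I_n)
  (V1 V2 : {set 'I_n}) (m : nat) (h : rel 'I_m)
  (M : 'M[R]_n) (sigma' : seq R) :
  simple_graph e ->
  V1 :&: V2 = set0 -> V1 :|: V2 = [set: 'I_n] ->
  simple_graph h -> connected_graph h ->
  (#|V2| <= m)%N ->
  in_S e M ->
  size sigma' = (m - #|V2|)%N ->
  (exists s : seq R, has_spectrum (principal_sub M V2) s /\
     generically_realisable h (s ++ sigma')) ->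
  exists N : 'M[R]_(#|V1| + m),
    in_S (partial_join e V1 (vertex_boundary e V2) h) N /\
    char_poly N = char_poly M * \prod_(x <- sigma') ('X - x%:P).
Proof.
move=> [esym eirr] V12 V1u _ _ V2m [MT Me] ssig [s [cps [Gsz Ggen]]].
have [l Em] : exists l, m = (#|V2| + l)%N by exists (m - #|V2|)%N; rewrite subnKC.
move: Gsz ssig; subst m => Gsz ssig; rewrite addKn in ssig.
have ss : size s = #|V2|.
  by move: Gsz; rewrite size_cat ssig => /eqP; rewrite eqn_add2r => /eqP.
pose f (a : 'I_(#|V1| + #|V2|)) : 'I_n :=
  match split a with inl i => enum_val i | inr j => enum_val j end.
have disj : forall x, x \in V1 -> x \in V2 -> False.
  by move=> x x1 x2; move/setP: V12 => /(_ x); rewrite !inE x1 x2.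
have finj : injective f.
  move=> a b E; rewrite -(splitK a) -(splitK b); congr unsplit; move: E.
  rewrite /f; case: (split a) => a'; case: (split b) => b' E.
  - by rewrite (enum_val_inj E).
  - by move: (disj (enum_val a')) => /(_ (enum_valP a')); rewrite E => /(_ (enum_valP b')) [].
  - by move: (disj (enum_val b')) => /(_ (enum_valP b')); rewrite -E => /(_ (enum_valP a')) [].
  - by rewrite (enum_val_inj E).
have ncard : (#|V1| + #|V2|)%N = n.
  by rewrite -cardsUI V1u V12 cards0 addn0 cardsT card_ord.
pose M' : 'M[R]_(#|V1| + #|V2|) := \matrix_(a, b) M (f a) (f b).
have cpM' : char_poly M' = char_poly M := char_poly_reindex M ncard finj.
have M'T : M'^T = M'.
  apply/matrixP => a b; rewrite !mxE.
  by move/matrixP: MT => /(_ (f a) (f b)); rewrite mxE.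
pose A := ulsubmx M'; pose B := ursubmx M'; pose C := drsubmx M'.
have [AT DB BD CT] : [/\ A^T = A, (dlsubmx M')^T = B, B^T = dlsubmx M' & C^T = C].
  have E : (block_mx A B (dlsubmx M') C)^T = block_mx A B (dlsubmx M') C by rewrite submxK.
  by move: E; rewrite tr_block_mx => /eq_block_mx [-> -> -> ->].
have M'E : M' = block_mx A B B^T C by rewrite BD submxK.
have Cp : C = principal_sub M V2.
  by apply/matrixP => i j; rewrite !mxE /f !split_rsh.
have cpC : char_poly C = \prod_(x <- s) ('X - x%:P) by rewrite Cp.
have [Q [QQ QC]] := spectral CT cpC.
have QQt := orthC QQ.
pose Ds := diag_mx (\row_(i < #|V2|) s`_i).
pose Dsg := diag_mx (\row_(i < l) sigma'`_i).
have DE : diag_mx (\row_(i < #|V2| + l) (s ++ sigma')`_i) = block_mx Ds 0 0 Dsg.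
  rewrite -diag_mx_row; congr diag_mx; apply/rowP => j; rewrite !mxE.
  case: splitP => j' ->; rewrite mxE nth_cat ss.
    by rewrite ltn_ord.
  by rewrite ltnNge leq_addr /= addKn.
pose Z : 'M[R]_(#|V2| + l, #|V2|) := col_mx Q^T 0.
pose y a := Z *m (row a B)^T.
pose Y := filter (fun v => v != 0) (map y (enum 'I_#|V1|)).
have [U [UU UD Uy]] := Ggen Y (filter_all _ _).
rewrite DE in UD.
pose Qe : 'M[R]_(#|V2| + l) := block_mx Q 0 0 1%:M.
pose W := U *m Qe^T.
pose Lc := block_mx C 0 0 Dsg.
pose L : 'M[R]_(#|V1| + (#|V2| + l)) := block_mx A (row_mx B 0) (col_mx B^T 0) Lc.
pose O : 'M[R]_(#|V1| + (#|V2| + l)) := block_mx 1%:M 0 0 W.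
have QeQ : Qe *m Qe^T = 1%:M.
  rewrite /Qe tr_block_mx !trmx0 trmx1 mulmx_block !mulmx0 !mul0mx !mulmx1.
  by rewrite !addr0 !add0r QQ -scalar_mx_block.
have QeQt := orthC QeQ.
have WW : W *m W^T = 1%:M.
  by rewrite /W trmx_mul trmxK mulmxA -(mulmxA U) QeQt mulmx1.
have OO : O *m O^T = 1%:M.
  rewrite /O tr_block_mx !trmx0 trmx1 mulmx_block !mulmx0 !mul0mx !mulmx1.
  by rewrite !addr0 !add0r WW -scalar_mx_block.
have DsT : Dsg^T = Dsg by rewrite /Dsg tr_diag_mx.
have LT : L^T = L.
  by rewrite /L /Lc !tr_block_mx !trmx0 tr_row_mx tr_col_mx trmxK !trmx0 AT CT DsT.
have NE : O *m L *m O^T =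
    block_mx A (row_mx B 0 *m W^T) (W *m col_mx B^T 0) (W *m Lc *m W^T).
  rewrite /O /L tr_block_mx !trmx0 trmx1 !mulmx_block !mulmx0 !mul0mx !mulmx1 !mul1mx.
  by rewrite !addr0 !add0r.
have WLc : W *m Lc *m W^T = U *m block_mx Ds 0 0 Dsg *m U^T.
  rewrite /W trmx_mul trmxK !mulmxA -(mulmxA U) -(mulmxA U) ; congr (_ *m _ *m _).
  rewrite /Qe /Lc tr_block_mx !trmx0 trmx1 !mulmx_block !mulmx0 !mul0mx !mulmx1 !mul1mx.
  by rewrite !addr0 !add0r QC mul0mx.
have WB : W *m col_mx B^T 0 = U *m Z *m B^T.
  rewrite /W -!mulmxA; congr (_ *m _).
  rewrite /Qe /Z tr_block_mx !trmx0 trmx1 mul_block_col mul_col_mx !mul0mx !mul1mx.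
  by rewrite !addr0.
have BW : row_mx B 0 *m W^T = (U *m Z *m B^T)^T.
  by rewrite -WB [RHS]trmx_mul tr_col_mx trmxK trmx0.
exists (O *m L *m O^T); split; last first.
  rewrite char_poly_orth // /L block_mxA char_poly_cast col_mx0 row_mx0.
  rewrite -M'E char_poly_block cpM' /Dsg char_poly_diag; congr (_ * _).
  rewrite (big_nth 0) big_mkord ssig; apply: eq_bigr => i _; by rewrite mxE.
split.
  by rewrite !trmx_mul trmxK LT mulmxA.
have Bent : forall a j, B a j = M (enum_val a) (enum_val j).
  by move=> a j; rewrite /B /ursubmx /rsubmx /usubmx !mxE /f split_lsh split_rsh.
have Aent : forall a b, A a b = M (enum_val a) (enum_val b).
  by move=> a b; rewrite /A /ulsubmx /lsubmx /usubmx !mxE /f !split_lsh.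
have ZZ : Z^T *m Z = 1%:M.
  by rewrite /Z tr_col_mx trmxK trmx0 mul_row_col mul0mx addr0.
have key : forall a (b : 'I_(#|V2| + l)),
    ((U *m Z *m B^T) b a != 0) = (enum_val a \in vertex_boundary e V2).
  move=> a b.
  have -> : (U *m Z *m B^T) b a = (U *m y a) b 0.
    by rewrite /y tr_row mulmxA -col_mulmx [RHS]mxE.
  have a1 := enum_valP a.
  case: (boolP (enum_val a \in vertex_boundary e V2)) => inX.
    move: (inX); rewrite inE => /andP [_ /existsP [yv /andP [yv2 eyv]]].
    have Bne : B a (enum_rank_in yv2 yv) != 0.
      rewrite Bent enum_rankK_in // Me //.
      by apply: contraTneq eyv => ->; rewrite eirr.
    apply: Uy; rewrite mem_filter; apply/andP; split; last first.
      by apply: map_f; rewrite mem_enum.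
    apply: contra Bne => /eqP ya0.
    have : (row a B)^T = 0 by rewrite -[(row a B)^T]mul1mx -ZZ -mulmxA -/(y a) ya0 mulmx0.
    by move/matrixP => /(_ (enum_rank_in yv2 yv) 0); rewrite !mxE => ->.
  have ra : row a B = 0.
    apply/rowP => j; rewrite [LHS]mxE [RHS]mxE Bent; apply/eqP; apply: contraNT inX => nz.
    have ne : enum_val a != enum_val j.
      by apply/eqP => E; apply: (disj (enum_val a)) => //; rewrite E enum_valP.
    rewrite inE; apply/andP; split.
      by apply/negP => a2; apply: (disj _ a1 a2).
    by apply/existsP; exists (enum_val j); rewrite enum_valP /= -Me.
  by rewrite /y ra trmx0 mulmx0 mulmx0 mxE eqxx.
move=> i j; rewrite NE /partial_join.
case: (split_cases i) => -[a ->]; case: (split_cases j) => -[b ->] ij;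
  rewrite ?split_lsh ?split_rsh.
- rewrite block_mxEul Aent Me //; apply: contraNneq ij => /enum_val_inj ->.
  by [].
- by rewrite block_mxEur BW mxE key.
- by rewrite block_mxEdl WB key.
- rewrite block_mxEdr WLc; case: UD => _ ->; last by apply: contraNneq ij => ->.
  by [].
Qed.
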